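(* Let $p\geq 5$ be prime, let $v\in\mathbb{R}^p$ have pairwise distinct coordinates, and let $H=(a_1,\dots,a_p)^\perp$ be a hyperplane. Let $\sigma=(ij)(kl)$ with $i,j,k,l$ distinct, and let $\pi$ be a $p$-cycle. Let $G\subset S_p$ be a subgroup containing $\pi$ such that $\dim\mathrm{Span}(Gv)>3$. If $H$ contains $Gv$ and $\sigma Gv$, then $a_i=a_j$ and $a_k=a_l$.
   Context: $S_p$ acts on $\mathbb{R}^p$ by permuting coordinates (the $j$-th coordinate of $\epsilon v$ is $v_{\epsilon^{-1}(j)}$); $Gv=\{gv:g\in G\}$. $(a_1,\dots,a_p)^\perp$ denotes the hyperplane $\{x:\sum_m a_mx_m=0\}$ with $(a_1,\dots,a_p)\neq 0$. *)

(* Defs.v *)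
From HB Require Import structures.
From mathcomp Require Import all_boot all_order all_algebra all_fingroup.
From mathcomp Require Import reals.
Set Implicit Arguments. Unset Strict Implicit. Unset Printing Implicit Defensive.
Import GRing.Theory Num.Theory.
Local Open Scope ring_scope.

Definition pact (R : ringType) (p : nat) (s : 'S_p) (v : 'rV[R]_p) : 'rV[R]_p :=
  \row_j v 0 (s^-1 j)%g.

Definition orbit_seq (R : ringType) (p : nat) (G : {group 'S_p}) (v : 'rV[R]_p)
  : seq 'rV[R]_p := [seq pact g v | g in G].

Definition in_hyperplane (R : ringType) (p : nat) (a x : 'rV[R]_p) : Prop :=
  \sum_(m < p) a 0 m * x 0 m = 0.

Definition is_pcycle (p : nat) (s : 'S_p) : Prop :=
  exists x : 'I_p, porbit s x = [set: 'I_p].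

(* Main.v *)
Require Import Defs.
From HB Require Import structures.
From mathcomp Require Import all_boot all_order all_algebra all_fingroup.
From mathcomp Require Import reals.
From mathcomp Require Import all_solvable all_field complex ring zify.
Import GRing.Theory Num.Theory.
Local Open Scope ring_scope.

Definition Spoly (p : nat) : {poly rat} := \poly_(n < p) 1.

Lemma Spoly_horner (K : fieldType) (f : {rmorphism rat -> K}) p (z : K) :
  (map_poly f (Spoly p)).[z] = \sum_(n < p) z ^+ n.
Proof.
rewrite (@horner_coef_wide _ p); last by rewrite size_map_poly size_poly.
by apply: eq_bigr => n _; rewrite coef_map coef_poly ltn_ord /= rmorph1 mul1r.
Qed.

Lemma geom0 (K : fieldType) p (z : K) : z ^+ p = 1 -> z != 1 ->
  \sum_(n < p) z ^+ n = 0.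
Proof.
move=> zp z1; have := subrX1 z p; rewrite zp subrr => /esym /eqP.
by rewrite mulf_eq0 subr_eq0 (negbTE z1) /= => /eqP.
Qed.

Lemma prim_neq1 {K : fieldType} {p} {w : K} : (1 < p)%N -> p.-primitive_root w -> w != 1.
Proof.
move=> p1 hw; apply/negP => /eqP w1.
have := eq_prim_root_expr hw 1 0; rewrite expr0 expr1 w1 eqxx.
by rewrite mod0n modn_small.
Qed.

Lemma prim_of_prime {K : fieldType} {p} {y : K} : prime p -> y ^+ p = 1 -> y != 1 ->
  p.-primitive_root y.
Proof.
move=> hp yp y1; have [m pm mdp] := prim_order_exists (prime_gt0 hp) yp.
case: (m =P 1%N) => [m1|/eqP m1].
  by move: pm; rewrite m1 => /prim_expr_order; rewrite expr1 => /eqP; rewrite (negbTE y1).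
by have:= prime_nt_dvdP hp m1 mdp => <-.
Qed.

Lemma irrS {C : numClosedFieldType} {p : nat} (hp : prime p) {w : C}
  (hw : p.-primitive_root w) (q : {poly rat}) :
  (size q <= p)%N -> (map_poly ratr q).[w] = 0 ->
  forall n m, (n < p)%N -> (m < p)%N -> q`_n = q`_m.
Proof.
move=> sq qw.
have p1 : (1 < p)%N := prime_gt1 hp.
have [->|q0] := eqVneq q 0; first by move=> *; rewrite !coef0.
have nc : ~~ coprimep q (Spoly p).
  apply/negP => cop.
  have cop' : coprimep (map_poly (ratr : {rmorphism rat -> C}) q) (map_poly (ratr : {rmorphism rat -> C}) (Spoly p)) by rewrite coprimep_map.
  have := @coprimep_root _ _ _ w cop'; rewrite /root qw eqxx => /(_ isT).
  by rewrite Spoly_horner geom0 ?eqxx // ?(prim_expr_order hw) // (prim_neq1 p1 hw).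
rewrite -(coprimep_map (ratr : {rmorphism rat -> algC})) in nc.
move: nc; rewrite /coprimep => /closed_rootP [y].
rewrite root_gcd => /andP [qy Sy].
have y1 : y != 1.
  apply/negP => /eqP e; move: Sy; rewrite e /root Spoly_horner.
  rewrite (eq_bigr (fun _ => 1)); last by move=> *; rewrite expr1n.
  by rewrite sumr_const card_ord pnatr_eq0 => /eqP p0; rewrite p0 in hp.
have yp : y ^+ p = 1.
  apply/eqP; rewrite -subr_eq0 subrX1; move: Sy; rewrite /root Spoly_horner.
  by move=> /eqP ->; rewrite mulr0.
have hy := prim_of_prime hp yp y1.
have [m0 [Dm mon] dv] := minCpolyP y.
have m0q : m0 %| q by rewrite -dv.
have m0S : m0 %| Spoly p by rewrite -dv.
have sm0 : size m0 = p.
  have := size_cyclotomic y p; rewrite -(minCpoly_cyclotomic hy) Dm size_map_poly.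
  by rewrite totient_prime // prednK // prime_gt0.
have sS : size (Spoly p) = p by rewrite size_poly_eq // oner_eq0.
have e1 : m0 %= Spoly p by rewrite -dvdp_size_eqp // sm0 sS.
have e2 : m0 %= q.
  by rewrite -dvdp_size_eqp // eqn_leq sm0 sq /= -sm0 andbT (dvdp_leq q0 m0q).
have : q %= Spoly p by apply: eqp_trans e1; rewrite eqp_sym.
case/eqpP => [[c1 c2]] /= /andP [c10 c20] e.
have key k : (k < p)%N -> q`_k = c2 / c1.
  move=> kp; have := congr1 (fun r : {poly rat} => r`_k) e.
  rewrite /= !coefZ coef_poly kp mulr1 => <-.
  by rewrite mulrC mulKf.
by move=> n m np mp; rewrite !key.
Qed.

Lemma sum_count {K : comNzRingType} {p} {z : K} : (0 < p)%N -> z ^+ p = 1 ->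
  forall P : seq nat,
  \sum_(x <- P) z ^+ x = \sum_(n < p) (count (fun x => (x %% p)%N == n) P)%:R * z ^+ n.
Proof.
move=> p0 zp; elim=> [|x P IH].
  by rewrite big_nil big1 // => n _; rewrite mul0r.
rewrite big_cons IH /=.
rewrite [RHS](eq_bigr (fun n : 'I_p => ((x %% p)%N == n)%:R * z ^+ n +
   (count (fun x => (x %% p)%N == n) P)%:R * z ^+ n)); last first.
  by move=> n _; rewrite natrD mulrDl.
rewrite big_split /=; congr (_ + _).
rewrite (bigD1 (Ordinal (ltn_pmod x p0))) //= eqxx mul1r big1 ?addr0.
  by rewrite {1}(divn_eq x p) exprD mulnC exprM zp expr1n mul1r.
by move=> n /negbTE; rewrite eq_sym => ne; rewrite -(inj_eq val_inj) /= in ne; rewrite ne mul0r.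
Qed.

Lemma sum1_seq (P : seq nat) : \sum_(x <- P) (1 : rat) = (size P)%:R.
Proof. by elim: P => [|x P IH]; rewrite ?big_nil ?big_cons ?IH //= -addn1 natrD addrC. Qed.

Lemma keyK {C : numClosedFieldType} {p} (hp : prime p) (w : C)
  (hw : p.-primitive_root w) (P N : seq nat) :
  size P = size N -> \sum_(x <- P) w ^+ x = \sum_(x <- N) w ^+ x ->
  forall x, x \in P -> has (fun y => (y %% p)%N == (x %% p)%N) N.
Proof.
move=> sPN ePN x xP.
have p0 := prime_gt0 hp.
pose cP n := (count (fun x => (x %% p)%N == n) P).
pose cN n := (count (fun x => (x %% p)%N == n) N).
pose c n : rat := (cP n)%:R - (cN n)%:R.
pose q := \poly_(n < p) c n.
have qw : (map_poly ratr q).[w] = 0.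
  rewrite (@horner_coef_wide _ p) ?size_map_poly ?size_poly //.
  rewrite (eq_bigr (fun n : 'I_p => (cP n)%:R * w ^+ n - (cN n)%:R * w ^+ n)).
    rewrite sumrB -!sum_count ?(prim_expr_order hw) // ePN subrr //.
  by move=> n _; rewrite coef_map coef_poly ltn_ord /= rmorphB !rmorph_nat mulrBl.
have hq := irrS hp hw q (size_poly p c) qw.
have cc n : (n < p)%N -> c n = c 0%N.
  by move=> np; have := hq n 0%N np p0; rewrite !coef_poly np p0.
have s0 : \sum_(n < p) c n = 0.
  rewrite sumrB.
  have h1 := sum_count p0 (expr1n rat p) P.
  have h2 := sum_count p0 (expr1n rat p) N.
  rewrite (eq_bigr (fun x => 1)) in h1; last by move=> *; rewrite expr1n.
  rewrite (eq_bigr (fun x => 1)) in h2; last by move=> *; rewrite expr1n.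
  rewrite sum1_seq in h1; rewrite sum1_seq in h2.
  rewrite (eq_bigr (fun n : 'I_p => (cP n)%:R * 1 ^+ n)); last by move=> *; rewrite expr1n mulr1.
  rewrite [X in _ - X](eq_bigr (fun n : 'I_p => (cN n)%:R * 1 ^+ n)); last by move=> *; rewrite expr1n mulr1.
  by rewrite -h1 -h2 sPN subrr.
have c00 : c 0%N = 0.
  move: s0; rewrite (eq_bigr (fun _ => c 0%N)); last by move=> n _; rewrite cc.
  rewrite sumr_const card_ord -mulr_natl => /eqP; rewrite mulf_eq0 pnatr_eq0.
  by rewrite eqn0Ngt p0 /= => /eqP.
have := cc _ (ltn_pmod x p0); rewrite c00 => /eqP; rewrite subr_eq0 eqr_nat => /eqP e.
rewrite has_count -/(cN _) -e /cP -has_count; apply/hasP; exists x => //.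
Qed.
Lemma combF (F : fieldType) (a b c e s1 s2 : F) :
  2 != 0 :> F -> a != b -> a != c -> a != e -> b != e -> c != e ->
  s1 != 0 -> s2 != 0 -> s1 != s2 -> s1 + s2 != 0 ->
  [|| a*s1 + e*s2 == a*s1 + c*s2, b*s1 + c*s2 == a*s1 + c*s2,
      a*s2 + c*s1 == a*s1 + c*s2 | b*s2 + e*s1 == a*s1 + c*s2] ->
  [|| a*s1 + e*s2 == b*s1 + e*s2, b*s1 + c*s2 == b*s1 + e*s2,
      a*s2 + c*s1 == b*s1 + e*s2 | b*s2 + e*s1 == b*s1 + e*s2] -> False.
Proof.
move=> h2 hab hac hae hbe hce h1 h2' h12 h12'.
have Z : forall x y u v : F, x = y -> u * v = x - y -> u != 0 -> v != 0 -> False.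
  move=> x y u v -> E u0 v0; move: E; rewrite subrr => /eqP; rewrite mulf_eq0.
  by rewrite (negbTE u0) (negbTE v0).
have D : forall x y : F, x != y -> x - y != 0 by move=> x y; rewrite subr_eq0.
move=> H1 H2; case/or4P: H1 => /eqP/esym E1.
- by apply: (Z _ _ s2 (c - e) E1) => //; [ring | exact: D].
- by apply: (Z _ _ s1 (a - b) E1) => //; [ring | exact: D].
- by apply: (Z _ _ (s1 - s2) (a - c) E1) => //; [ring | exact: D | exact: D].
case/or4P: H2 => /eqP/esym E2.
- by apply: (Z _ _ s1 (b - a) E2) => //; [ring | rewrite eq_sym in hab; exact: D].
- by apply: (Z _ _ s2 (e - c) E2) => //; [ring | rewrite eq_sym in hce; exact: D].
- have A1 : (s1 + s2) * (a - b + c - e) = 0.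
    have -> : (s1 + s2) * (a - b + c - e) = (a*s1 + c*s2 - (b*s2 + e*s1)) - (b*s1 + e*s2 - (a*s2 + c*s1)) by ring.
    by rewrite E1 E2 !subrr.
  have A2 : (s1 - s2) * (a + b - c - e) = 0.
    have -> : (s1 - s2) * (a + b - c - e) = (a*s1 + c*s2 - (b*s2 + e*s1)) + (b*s1 + e*s2 - (a*s2 + c*s1)) by ring.
    by rewrite E1 E2 !subrr addr0.
  move: A1 => /eqP; rewrite mulf_eq0 (negbTE h12') /= => /eqP A1.
  move: A2 => /eqP; rewrite mulf_eq0 subr_eq0 (negbTE h12) /= => /eqP A2.
  have : 2 * (a - e) = 0.
    have -> : 2 * (a - e) = (a - b + c - e) + (a + b - c - e) by ring.
    by rewrite A1 A2 addr0.
  by move/eqP; rewrite mulf_eq0 (negbTE h2) subr_eq0 (negbTE hae).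
- by apply: (Z _ _ (s1 - s2) (b - e) E2) => //; [ring | exact: D | exact: D].
Qed.

Section Cyc.
Variables (p : nat) (pi : 'S_p) (x0 : 'I_p).
Hypothesis hp0 : (0 < p)%N.
Hypothesis hx0 : porbit pi x0 = [set: 'I_p].

Definition ind (m : 'I_p) : nat := index m (traject pi x0 p).

Lemma card_orb : #|porbit pi x0| = p.
Proof. by rewrite hx0 cardsT card_ord. Qed.

Lemma uniq_tr : uniq (traject pi x0 p).
Proof. by have := uniq_traject_porbit pi x0; rewrite card_orb. Qed.

Lemma mem_tr m : m \in traject pi x0 p.
Proof. by have := porbit_traject pi x0 m; rewrite card_orb hx0 inE. Qed.

Lemma ind_lt m : (ind m < p)%N.
Proof. by have := mem_tr m; rewrite -index_mem size_traject. Qed.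

Lemma iter_ind m : iter (ind m) pi x0 = m.
Proof. by rewrite -(nth_traject pi (ind_lt m)) nth_index // mem_tr. Qed.

Lemma iter_p : iter p pi x0 = x0.
Proof. by have := iter_porbit pi x0; rewrite card_orb. Qed.

Lemma iter_mod n : iter n pi x0 = iter (n %% p) pi x0.
Proof.
rewrite {1}(divn_eq n p) addnC iterD; congr (iter _ _ _).
by elim: (n %/ p)%N => [|k IH] //=; rewrite mulSn iterD IH iter_p.
Qed.

Lemma ind_iter r : (r < p)%N -> ind (iter r pi x0) = r.
Proof.
move=> rp; rewrite /ind -(nth_traject pi rp) index_uniq ?size_traject //.
exact: uniq_tr.
Qed.

Lemma ind_pi m : ind (pi m) = ((ind m).+1 %% p)%N.
Proof.
by rewrite -{1}(iter_ind m) -iterS iter_mod ind_iter // ltn_pmod.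
Qed.

Lemma ind_inj : injective ind.
Proof. by move=> m n e; rewrite -(iter_ind m) -(iter_ind n) e. Qed.

Variable C : fieldType.
Variable w : C.
Hypothesis hw : p.-primitive_root w.

Definition ee (m : 'I_p) : C := w ^+ ind m.

Lemma ee_pi m : ee (pi m) = w * ee m.
Proof. by rewrite /ee ind_pi (prim_expr_mod hw) exprS. Qed.

Lemma ee_piX t m : ee ((pi ^+ t)%g m) = w ^+ t * ee m.
Proof.
elim: t => [|t IH]; first by rewrite expg0 perm1 expr0 mul1r.
by rewrite expgSr permM ee_pi IH exprS mulrA.
Qed.

Lemma ee_inj : injective ee.
Proof.
move=> m n /eqP; rewrite /ee (eq_prim_root_expr hw) !modn_small ?ind_lt //.
by move/eqP/ind_inj.
Qed.

Lemma ee_p m : ee m ^+ p = 1.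
Proof. by rewrite /ee -exprM mulnC exprM (prim_expr_order hw) expr1n. Qed.

Lemma ee_neq0 m : ee m != 0.
Proof.
apply/negP => /eqP e0; have := ee_p m; rewrite e0 expr0n.
by rewrite gtn_eqF // => /eqP; rewrite eq_sym oner_eq0.
Qed.
End Cyc.
Lemma prim_exists (F : numClosedFieldType) n : (n > 0)%N -> {z : F | n.-primitive_root z}.
Proof.
pose p : {poly F} := 'X^n - 1; have [r Dp] := closed_field_poly_normal p.
move=> n_gt0; apply/sigW; rewrite (monicP _) ?monicXnsubC // scale1r in Dp.
have rn1: all n.-unity_root r by apply/allP=> z; rewrite -root_prod_XsubC -Dp.
have sz_r: (n < (size r).+1)%N.
  by rewrite -(size_prod_XsubC r id) -Dp size_XnsubC.
have [|z] := hasP (has_prim_root n_gt0 rn1 _ sz_r); last by exists z.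
by rewrite -separable_prod_XsubC -Dp separable_Xn_sub_1 // pnatr_eq0 -lt0n.
Qed.
Section T.
Variable R : realType.
Lemma ReD (x y : R[i]) : complex.Re (x + y) = complex.Re x + complex.Re y.
Proof. by move: x y => [a b] [c d]. Qed.
Lemma ImD (x y : R[i]) : complex.Im (x + y) = complex.Im x + complex.Im y.
Proof. by move: x y => [a b] [c d]. Qed.
Lemma ReM (r : R) (z : R[i]) : complex.Re ((r%:C)%C * z) = r * complex.Re z.
Proof. by case: z => a b /=; rewrite mul0r subr0. Qed.
Lemma ImM (r : R) (z : R[i]) : complex.Im ((r%:C)%C * z) = r * complex.Im z.
Proof. by case: z => a b /=; rewrite mul0r addr0. Qed.
Lemma Re_sum (I : finType) (F : I -> R[i]) : complex.Re (\sum_i F i) = \sum_i complex.Re (F i).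
Proof. by apply: (big_morph _ ReD). Qed.
Lemma Im_sum (I : finType) (F : I -> R[i]) : complex.Im (\sum_i F i) = \sum_i complex.Im (F i).
Proof. by apply: (big_morph _ ImD). Qed.
Lemma conj_root (z : R[i]) n : (0 < n)%N -> z ^+ n = 1 -> Num.conj z = z^-1.
Proof.
move=> n0 zn.
have : `|z| = 1.
  apply/eqP; rewrite -(pexpr_eq1 (n:=n)) //; last by rewrite -normrX zn normr1.
by rewrite invC_norm => ->; rewrite expr1n invr1 mul1r.
Qed.
Lemma conj_real (r : R) : Num.conj ((r%:C)%C : R[i]) = (r%:C)%C.
Proof. apply: conj_Creal. by rewrite complex_real. Qed.
End T.

Lemma modeqF p (hp : prime p) (x y : nat) :
  ((x%:R : 'F_p) == y%:R) = ((x %% p)%N == (y %% p)%N).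
Proof. by rewrite -(inj_eq val_inj) /= !val_Fp_nat. Qed.

Section Four.
Variables (R : realType) (p : nat) (pi : 'S_p) (x0 : 'I_p).
Hypothesis hp : prime p.
Hypothesis hx0 : porbit pi x0 = [set: 'I_p].
Variable w : R[i].
Hypothesis hw : p.-primitive_root w.
Variable d : 'I_p -> R.
Let p0 : (0 < p)%N := prime_gt0 hp.
Local Notation e := (@ee p pi x0 _ w).
Let ePX t m : e ((pi ^+ t)%g m) = w ^+ t * e m := ee_piX p pi x0 p0 hx0 _ w hw t m.
Let e0 m : e m != 0 := ee_neq0 p pi x0 p0 _ w hw m.
Let einj : injective e := ee_inj p pi x0 hx0 _ w hw.
Let ep m : e m ^+ p = 1 := ee_p p pi x0 _ w hw m.

Definition Xs (x : 'rV[R]_p) (s : nat) : R[i] := \sum_m ((x 0 m)%:C)%C * (e m)^-1 ^+ s.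
Definition Ds (s : nat) : R[i] := \sum_m ((d m)%:C)%C * e m ^+ s.

Lemma orbit_inj m : injective (fun t : 'I_p => (pi ^+ t)%g m).
Proof.
move=> t1 t2 /= E.
have := congr1 e E; rewrite !ePX => /mulIf.
move=> /(_ (e0 m)) /eqP; rewrite (eq_prim_root_expr hw).
by rewrite !modn_small // => /eqP; apply: val_inj.
Qed.

Lemma fourier (x : 'rV[R]_p) : (forall t : 'I_p, \sum_m d m * x 0 ((pi ^+ t)%g m) = 0) ->
  forall s, Ds s * Xs x s = 0.
Proof.
move=> hT s; rewrite /Ds mulr_suml.
rewrite (eq_bigr (fun m => \sum_(t : 'I_p) ((d m)%:C)%C * ((x 0 ((pi ^+ t)%g m))%:C)%C * ((w ^+ t)^-1 ^+ s))); last first.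
  move=> m _; rewrite /Xs (reindex_inj (orbit_inj m)) /= mulr_sumr.
  apply: eq_bigr => t _; rewrite ePX invfM exprMn.
  have em := e0 m.
  have H1 : e m ^+ s * (e m)^-1 ^+ s = 1 by rewrite -exprMn mulfV // expr1n.
  by rewrite -[RHS]mulr1 -H1; ring.
rewrite exchange_big /= big1 // => t _.
rewrite -mulr_suml.
rewrite (eq_bigr (fun m => ((d m * x 0 ((pi ^+ t)%g m))%:C)%C)); last by move=> m _; rewrite rmorphM.
by rewrite -rmorph_sum hT rmorph0 mul0r.
Qed.

Lemma inversion (x : 'rV[R]_p) : (forall s, (s < p)%N -> Xs x s = 0) -> x = 0.
Proof.
move=> H; apply/rowP => n; rewrite mxE.
have : \sum_(s < p) Xs x s * e n ^+ s = 0 by rewrite big1 // => s _; rewrite H ?mul0r.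
rewrite (eq_bigr (fun s : 'I_p => \sum_m ((x 0 m)%:C)%C * ((e m)^-1 * e n) ^+ s)); last first.
  by move=> s _; rewrite /Xs mulr_suml; apply: eq_bigr => m _; rewrite exprMn mulrA.
rewrite exchange_big /= (bigD1 n) //= [X in _ + X]big1 ?addr0; last first.
  move=> m mn; rewrite -mulr_sumr geom0 ?mulr0 //.
    by rewrite exprMn exprVn !ep invr1 mul1r.
  apply/negP => /eqP E.
  have : e m * ((e m)^-1 * e n) = e m * 1 by rewrite E.
  by rewrite mulrA mulfV // mul1r mulr1 => /einj En; rewrite En eqxx in mn.
rewrite mulVf // (eq_bigr (fun _ => ((x 0 n)%:C)%C)); last by move=> *; rewrite expr1n mulr1.
rewrite sumr_const card_ord -rmorphMn /= => /eqP.
rewrite -(rmorph0 (real_complex R)) => /eqP /complexI /eqP.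
by rewrite mulrn_eq0 (negbTE (lt0n_neq0 p0)) /= => /eqP.
Qed.

Lemma Xs_conj (x : 'rV[R]_p) s : (s <= p)%N -> Num.conj (Xs x s) = Xs x (p - s).
Proof.
move=> sp; rewrite /Xs rmorph_sum; apply: eq_bigr => m _.
rewrite rmorphM rmorphXn /= conj_real fmorphV.
congr (_ * _).
transitivity (((e m)^-1)^-1 ^+ s); first by congr (_ ^-1 ^+ _); exact: (@conj_root R _ p p0 (ep m)).
rewrite invrK.
have H : (e m)^-1 ^+ (p - s) * (e m)^-1 ^+ s = 1 by rewrite -exprD subnK // exprVn ep invr1.
have B0 : (e m)^-1 ^+ s != 0 by rewrite expf_neq0 // invr_eq0.
rewrite -[RHS]mulr1 -(mulfV B0) mulrA H mul1r exprVn invrK //.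
Qed.

Variables (i j k l : 'I_p) (al be : R).
Hypotheses (hij : i != j) (hik : i != k) (hil : i != l)
  (hjk : j != k) (hjl : j != l) (hkl : k != l).
Hypothesis hdv : forall m, d m = if m == i then al else if m == j then - al
  else if m == k then be else if m == l then - be else 0.

Lemma Ds_form s : Ds s = (al%:C)%C * (e i ^+ s - e j ^+ s) + (be%:C)%C * (e k ^+ s - e l ^+ s).
Proof.
rewrite /Ds (bigD1 i) //= (bigD1 j) /=; last by rewrite eq_sym.
rewrite (bigD1 k) /=; last by rewrite eq_sym hik eq_sym hjk.
rewrite (bigD1 l) /=; last by rewrite eq_sym hil eq_sym hjl eq_sym hkl.
rewrite big1 ?addr0; last first.
  move=> m /andP [/andP [/andP [mi mj] mk] ml]; rewrite hdv.
  by rewrite (negbTE mi) (negbTE mj) (negbTE mk) (negbTE ml) rmorph0 mul0r.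
rewrite !hdv eqxx (eq_sym j i) (negbTE hij) eqxx (eq_sym k i) (negbTE hik).
rewrite (eq_sym k j) (negbTE hjk) eqxx (eq_sym l i) (negbTE hil) (eq_sym l j).
rewrite (negbTE hjl) (eq_sym l k) (negbTE hkl) eqxx !rmorphN /=.
ring.
Qed.

Hypothesis hp5 : (5 <= p)%N.

Lemma ee_w m s : e m ^+ s = w ^+ (ind p pi x0 m * s).
Proof. by rewrite exprM. Qed.

Lemma zeros s1 s2 : ~~ ((al == 0) && (be == 0)) -> (0 < s1 < p)%N -> (0 < s2 < p)%N ->
  Ds s1 = 0 -> Ds s2 = 0 -> s1 = s2 \/ (s1 + s2 = p)%N.
Proof.
move=> nab /andP [s10 s1p] /andP [s20 s2p]; rewrite !Ds_form => D1 D2.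
set A1 := e i ^+ s1 - e j ^+ s1 in D1; set B1 := e k ^+ s1 - e l ^+ s1 in D1.
set A2 := e i ^+ s2 - e j ^+ s2 in D2; set B2 := e k ^+ s2 - e l ^+ s2 in D2.
have det : A1 * B2 - A2 * B1 = 0.
  case/nandP: nab => [a0|b0].
    have : (al%:C)%C * (A1 * B2 - A2 * B1) = 0.
      have -> : (al%:C)%C * (A1 * B2 - A2 * B1) =
        ((al%:C)%C * A1 + (be%:C)%C * B1) * B2 - ((al%:C)%C * A2 + (be%:C)%C * B2) * B1 by ring.
      by rewrite D1 D2 !mul0r subrr.
    move/eqP; rewrite mulf_eq0 => /orP [|/eqP //].
    by rewrite -(rmorph0 (real_complex R)) => /eqP /complexI /eqP; rewrite (negbTE a0).
  have : (be%:C)%C * (A1 * B2 - A2 * B1) = 0.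
    have -> : (be%:C)%C * (A1 * B2 - A2 * B1) =
      ((al%:C)%C * A2 + (be%:C)%C * B2) * A1 - ((al%:C)%C * A1 + (be%:C)%C * B1) * A2 by ring.
    by rewrite D1 D2 !mul0r subrr.
  move/eqP; rewrite mulf_eq0 => /orP [|/eqP //].
  by rewrite -(rmorph0 (real_complex R)) => /eqP /complexI /eqP; rewrite (negbTE b0).
set a := ind p pi x0 i; set b := ind p pi x0 j; set c := ind p pi x0 k; set f := ind p pi x0 l.
pose P := [:: a*s1 + c*s2; b*s1 + f*s2; a*s2 + f*s1; b*s2 + c*s1]%N.
pose N := [:: a*s1 + f*s2; b*s1 + c*s2; a*s2 + c*s1; b*s2 + f*s1]%N.
have EPN : \sum_(x <- P) w ^+ x = \sum_(x <- N) w ^+ x.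
  apply/eqP; rewrite -subr_eq0; apply/eqP; rewrite -det /A1 /B1 /A2 /B2 !ee_w.
  rewrite !big_cons !big_nil !exprD -/a -/b -/c -/f.
  ring.
have H0 := @keyK _ _ hp w hw P N (erefl 4%N) EPN (a*s1 + c*s2)%N (mem_head _ _).
have H1 := @keyK _ _ hp w hw P N (erefl 4%N) EPN (b*s1 + f*s2)%N (@mem_behead _ P _ (mem_head _ _)).
rewrite /= -!(modeqF _ hp) !natrD !natrM in H0 H1.
have lt m : (ind p pi x0 m < p)%N := ind_lt p pi x0 hx0 m.
have dF m1 m2 : m1 != m2 -> ((ind p pi x0 m1)%:R : 'F_p) != (ind p pi x0 m2)%:R.
  move=> mm; rewrite (modeqF _ hp) !modn_small //; apply: contra mm => /eqP E.
  by apply/eqP; apply: (ind_inj p pi x0 hx0).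
case: (eqVneq s1 s2) => [-> | n12]; first by left.
case: (eqVneq (s1 + s2)%N p) => [-> | n12']; first by right.
have F0 n : ((n%:R : 'F_p) == 0) = ((n %% p)%N == 0%N) by have := modeqF _ hp n 0; rewrite mod0n.
exfalso; rewrite !orbF in H0 H1.
apply: (@combF _ _ _ _ _ (s1%:R) (s2%:R) _ (dF _ _ hij) (dF _ _ hik) (dF _ _ hil) (dF _ _ hjl) (dF _ _ hkl) _ _ _ _ H0 H1).
- by rewrite F0 modn_small // (leq_trans _ hp5).
- by rewrite F0 modn_small // -lt0n.
- by rewrite F0 modn_small // -lt0n.
- by rewrite (modeqF _ hp) !modn_small.
- rewrite -natrD F0.
  case: (ltnP (s1 + s2) p) => h.
    by rewrite modn_small // -lt0n addn_gt0 s10.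
  rewrite -(subnKC h) modnDl modn_small; last first.
    move: s1p s2p; clear; lia.
  move: n12' h; clear; lia.
Qed.
End Four.
Theorem lemma4p6 (R : realType) (p : nat) (hp : prime p) (hp5 : (5 <= p)%N)
  (v : 'rV[R]_p) (hv : injective (fun m : 'I_p => v 0 m))
  (a : 'rV[R]_p) (ha : a != 0)
  (i j k l : 'I_p) (hij : i != j) (hik : i != k) (hil : i != l)
  (hjk : j != k) (hjl : j != l) (hkl : k != l)
  (pi : 'S_p) (hpi : is_pcycle pi)
  (G : {group 'S_p}) (hpiG : pi \in G)
  (hdim : (3 < \dim (<<orbit_seq G v>>)%VS)%N)
  (hH1 : forall g, g \in G -> in_hyperplane a (pact g v))
  (hH2 : forall g, g \in G ->
           in_hyperplane a (pact (tperm i j * tperm k l)%g (pact g v))) :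
  a 0 i = a 0 j /\ a 0 k = a 0 l.
Proof.
have p0 : (0 < p)%N := prime_gt0 hp.
case: hpi => x0 hx0.
have [w hw] := prim_exists (R[i]) p p0.
set sg := (tperm i j * tperm k l)%g in hH2.
pose d (m : 'I_p) := a 0 m - a 0 (sg m).
pose al := a 0 i - a 0 j; pose be := a 0 k - a 0 l.
case: (boolP ((al == 0) && (be == 0))).
  by case/andP => /eqP /subr0_eq -> /eqP /subr0_eq ->.
move=> nab; exfalso.
have hdv : forall m, d m = if m == i then al else if m == j then - al
  else if m == k then be else if m == l then - be else 0.
  move=> m; rewrite /d /sg permM.
  have [->|nmi] := eqVneq m i.
    by rewrite tpermL (@tpermD _ k l j) // eq_sym.
  have [->|nmj] := eqVneq m j.
    by rewrite tpermR (@tpermD _ k l i) 1?eq_sym // opprB.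
  have [->|nmk] := eqVneq m k.
    by rewrite (@tpermD _ i j k) // tpermL.
  have [->|nml] := eqVneq m l.
    by rewrite (@tpermD _ i j l) // tpermR opprB.
  by rewrite (@tpermD _ i j m) 1?eq_sym // (@tpermD _ k l m) 1?eq_sym // subrr.
have hd : forall g, g \in G -> \sum_m d m * pact g v 0 m = 0.
  move=> g gG; have h1 := hH1 g gG; have h2 := hH2 g gG.
  rewrite /in_hyperplane in h1 h2.
  rewrite (reindex_inj (@perm_inj _ sg)) /= in h2.
  rewrite /d (eq_bigr (fun m => a 0 m * pact g v 0 m - a 0 (sg m) * pact g v 0 m)); last first.
    by move=> m _; rewrite mulrBl.
  have h3 : \sum_m a 0 (sg m) * pact g v 0 m = 0.
    by rewrite -[RHS]h2; apply: eq_bigr => m _; rewrite /pact !mxE permK.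
  by rewrite sumrB h1 h3 subrr.
set W := (<<orbit_seq G v>>)%VS in hdim *.
pose Nm : 'M[R]_(p, p) := \matrix_(n, t) d ((((pi ^+ t) ^-1)%g) n).
have keyN : forall (x : 'rV[R]_p) (t : 'I_p),
    (x *m Nm) 0 t = \sum_m d m * x 0 ((pi ^+ t)%g m).
  move=> x t; rewrite !mxE (reindex_inj (@perm_inj _ (pi ^+ t)%g)) /=.
  by apply: eq_bigr => m _; rewrite mxE permK mulrC.
have hW : forall x, x \in W -> forall t : 'I_p, \sum_m d m * x 0 ((pi ^+ t)%g m) = 0.
  have sub : (W <= lker (linfun (mulmxr Nm)))%VS.
    apply/span_subvP => y /imageP [g gG ->].
    rewrite memv_ker lfunE /=; apply/eqP/rowP => t; rewrite keyN mxE.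
    rewrite -[RHS](hd (g * ((pi ^+ t)^-1))%g); last by rewrite groupM ?groupV ?groupX.
    by apply: eq_bigr => m _; rewrite /pact !mxE invMg invgK permM.
  move=> x xW t; rewrite -keyN.
  have := subvP sub x xW; rewrite memv_ker lfunE /= => /eqP ->.
  by rewrite mxE.
pose D := Ds R p pi x0 w d.
have Z := zeros R p pi x0 hp hx0 w hw d i j k l al be hij hik hil hjk hjl hkl hdv hp5.
have [s0 [s00 s0p hs0]] : exists s0, [/\ (0 < s0)%N, (s0 < p)%N &
    forall s, (0 < s < p)%N -> D s = 0 -> s = s0 \/ (s + s0 = p)%N].
  case: (pickP (fun s : 'I_p => (0 < s)%N && (D s == 0))) => [t /andP [t0 /eqP Dt] | none].
    exists t; split => // s /andP [s0 sp] Ds0.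
    have := Z s t nab; rewrite s0 sp t0 ltn_ord => /(_ isT isT Ds0 Dt) [->|]; [by left | by right].
  exists 1%N; split => //; first exact: prime_gt1.
  move=> s /andP [s0 sp] Ds0; have := none (Ordinal sp).
  by rewrite /= s0 Ds0 eqxx.
pose u (m : 'I_p) := ((@ee p pi x0 _ w m)^-1) ^+ s0.
pose M : 'M[R]_(p, 3) := \matrix_(m, r) (if (r : nat) == 0%N then 1
   else if (r : nat) == 1%N then complex.Re (u m) else complex.Im (u m)).
pose L : 'Hom('rV[R]_p, 'rV[R]_3) := linfun (mulmxr M).
have cap0 : (W :&: lker L = 0)%VS.
  apply/eqP; rewrite -subv0; apply/subvP => x; rewrite memv_cap memv0 => /andP [xW xK].
  have hT := hW x xW.
  have F := fourier R p pi x0 hp hx0 w hw d x hT.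
  move: xK; rewrite memv_ker lfunE /= => /eqP xM.
  have c0 (r : 'I_3) : \sum_m x 0 m * M m r = 0.
    by move/rowP: xM => /(_ r); rewrite !mxE.
  pose X := Xs R p pi x0 w x.
  have X0 : X 0%N = 0.
    rewrite /X /Xs (eq_bigr (fun m => ((x 0 m * M m (0 : 'I_3))%:C)%C)); last first.
      by move=> m _; rewrite expr0 mulr1 mxE /= mulr1.
    by rewrite -rmorph_sum c0 rmorph0.
  have Xs0 : X s0 = 0.
    have hre : complex.Re (X s0) = 0.
      rewrite /X /Xs Re_sum -[RHS](c0 (1 : 'I_3)); apply: eq_bigr => m _.
        by rewrite mxE /= /u; case: (_ ^+ s0) => r1 r2 /=; rewrite mul0r subr0.
    have him : complex.Im (X s0) = 0.
      rewrite /X /Xs Im_sum -[RHS](c0 (2 : 'I_3)); apply: eq_bigr => m _.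
      by rewrite mxE /= /u; case: (_ ^+ s0) => r1 r2 /=; rewrite mul0r addr0.
    by move: hre him; case: (X s0) => r1 r2 /= -> ->.
  have Xps0 : X (p - s0)%N = 0.
    by rewrite /X -Xs_conj ?(ltnW s0p) // -/(X s0) Xs0 rmorph0.
  have x0' := inversion R p pi x0 hp hx0 w hw x.
  apply/eqP; apply: x0' => s sp.
  have [->|ns0] := eqVneq s 0%N; first exact: X0.
  have [->|nss0] := eqVneq s s0; first exact: Xs0.
  have [->|nps0] := eqVneq s (p - s0)%N; first exact: Xps0.
  have Dn : D s != 0.
    apply/eqP => Ds0; have := hs0 s; rewrite lt0n ns0 sp => /(_ isT Ds0) [/eqP|].
      by rewrite (negbTE nss0).
    by move=> E; move/eqP: nps0; apply; rewrite -E addnK.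
  by have /eqP := F s; rewrite mulf_eq0 (negbTE Dn) /= => /eqP.
move: hdim; rewrite -(limg_dim_eq cap0) => hdim.
have := dimvS (subvf (L @: W)%VS); rewrite dimvf /dim /= mul1n.
by move=> h; have := leq_ltn_trans h hdim; rewrite ltnn.
Qed.
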